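(* Let $G$ be a graph with a min-max clique covering $\{C_1,\dots,C_\ell\}$ that has simple intersection, let $\mathcal{C}(G)$ be the compressed cliques graph constructed from it, and let $\phi:V(G)\to V(\mathcal{C}(G))$ be given by $\phi(v)=v_{i,j}$ if $v\in C_i\cap C_j$ ($i\ne j$) and $\phi(v)=v_{i,i}$ if $v$ lies in $C_i$ and in no other clique of the covering. If $C$ is a clique in $\mathcal{C}(G)$, then $\phi^{-1}(C)$ is a clique in $G$.
   Context: A clique covering of a graph is a set of cliques such that every edge lies in at least one of them; $\operatorname{cc}(G)$ is its minimum size. A min-max clique covering is a clique covering of size $\operatorname{cc}(G)$ consisting of maximal cliques; it has simple intersection if no three distinct cliques of it share a vertex. Put $C_{i,j}=C_i\cap C_j$ ($i\ne j$) and $C_{i,i}=C_i\setminus\bigcup_{j\ne i}C_j$; the compressed cliques graph $\mathcal{C}(G)$ has a vertex $v_{i,j}$ for each non-empty $C_{i,j}$ (including $i=j$), with $v_{i,j}\sim v_{i',j'}$ iff $\{i,j\}\cap\{i',j'\}\ne\emptyset$. *)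

(* Defs.v *)
From mathcomp Require Import all_boot.
Set Implicit Arguments. Unset Strict Implicit. Unset Printing Implicit Defensive.

Section Graphs.
Variables (T : finType) (e : rel T).

Definition simple_graph : Prop := symmetric e /\ irreflexive e.

Definition is_clique (K : {set T}) : Prop :=
  forall x y, x \in K -> y \in K -> x != y -> e x y.

Definition is_maximal_clique (K : {set T}) : Prop :=
  is_clique K /\ forall K' : {set T}, is_clique K' -> K \subset K' -> K' = K.

Definition is_clique_covering (l : nat) (C : 'I_l -> {set T}) : Prop :=
  (forall i, is_clique (C i)) /\
  (forall x y, e x y -> exists i, (x \in C i) && (y \in C i)).

Definition is_cc (l : nat) : Prop :=
  (exists C : 'I_l -> {set T}, injective C /\ is_clique_covering C) /\
  (forall (l' : nat) (C' : 'I_l' -> {set T}), is_clique_covering C' -> l <= l').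

Definition min_max_clique_covering (l : nat) (C : 'I_l -> {set T}) : Prop :=
  injective C /\ is_clique_covering C /\ (forall i, is_maximal_clique (C i)) /\ is_cc l.

Definition simple_intersection (l : nat) (C : 'I_l -> {set T}) : Prop :=
  forall i j k v, i != j -> j != k -> i != k ->
    v \in C i -> v \in C j -> v \in C k -> False.

End Graphs.

Section Compressed.
Variables (T : finType) (l : nat) (C : 'I_l -> {set T}).

(* The vertex v_{i,j} of the compressed cliques graph is encoded by the
   unordered index set A = {i,j} (so v_{i,i} is encoded by {i}). *)
Definition is_index_pair (A : {set 'I_l}) : bool :=
  [exists i, exists j, A == [set i; j]].

(* C_{i,j} = C_i \cap C_j (i != j),  C_{i,i} = C_i \ U_{j != i} C_j. *)
Definition Cpart (A : {set 'I_l}) : {set T} :=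
  if #|A| == 1 then
    \bigcup_(i in A) (C i :\: \bigcup_(j | j \notin A) C j)
  else \bigcap_(i in A) C i.

Definition CV : {set {set 'I_l}} :=
  [set A | is_index_pair A && (Cpart A != set0)].

Definition cadj (A A' : {set 'I_l}) : bool :=
  [&& A \in CV, A' \in CV, A != A' & ~~ [disjoint A & A']].

Definition is_cclique (K : {set {set 'I_l}}) : Prop :=
  K \subset CV /\ forall A A', A \in K -> A' \in K -> A != A' -> cadj A A'.

(* phi(v) = v_{i,j} if v \in C_{i,j}; None if v lies in no clique of the covering. *)
Definition phi (v : T) : option {set 'I_l} :=
  [pick A | (A \in CV) && (v \in Cpart A)].

Definition phi_preim (K : {set {set 'I_l}}) : {set T} :=
  [set v | if phi v is Some A then A \in K else false].

End Compressed.

(* Main.v *)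
Require Import Defs.
From mathcomp Require Import all_boot.
Set Implicit Arguments.

Lemma Cpart_sub {T : finType} (l : nat) (C : 'I_l -> {set T}) (A : {set 'I_l}) k v :
  k \in A -> v \in Cpart C A -> v \in C k.
Proof.
rewrite /Cpart; case: ifP => [/cards1P [i ->] | _] kA.
  case/bigcupP=> j; rewrite !inE in kA * => /eqP -> hv.
  by rewrite (eqP kA); case/andP: hv.
by move=> /bigcapP; apply.
Qed.

Lemma phi_some {T : finType} (l : nat) (C : 'I_l -> {set T}) v (K : {set {set 'I_l}}) :
  v \in phi_preim C K -> exists A, [/\ A \in K, A \in CV C & v \in Cpart C A].
Proof.
rewrite inE /phi; case: pickP => [A /andP [h1 h2] hK|//].
by exists A.
Qed.

Lemma CV_nonempty {T : finType} (l : nat) (C : 'I_l -> {set T}) A :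
  A \in CV C -> exists k, k \in A.
Proof.
rewrite inE => /andP [/existsP [i /existsP [j /eqP ->]] _].
by exists i; rewrite !inE eqxx.
Qed.

Unset Implicit Arguments.
Theorem mainTheorem20 (T : finType) (e : rel T) (l : nat) (C : 'I_l -> {set T})
    (K : {set {set 'I_l}}) :
  simple_graph e ->
  min_max_clique_covering e C ->
  simple_intersection C ->
  is_cclique C K ->
  is_clique e (phi_preim C K).
Proof.
move=> _ [_ [[Ccl _] _]] _ [_ Kcl] x y hx hy xy.
have [A [AK ACV xA]] := phi_some hx.
have [B [BK BCV yB]] := phi_some hy.
have [k [kA kB]] : exists k, k \in A /\ k \in B.
  case: (eqVneq A B) => [<- | AB].
    by have [k kA] := CV_nonempty ACV; exists k.
  have := Kcl A B AK BK AB; rewrite /cadj => /and4P [_ _ _].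
  by case/pred0Pn => k /andP [h1 h2]; exists k.
exact: (Ccl k) (Cpart_sub C kA xA) (Cpart_sub C kB yB) xy.
Qed.
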